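(* In the setting of the context, consider a Case 1 spacetime ($\partial_v r_-=0$, so $x_-(v)\equiv0$). Then the inner AH $x=0$ consists of radially outgoing null geodesics; radially outgoing null geodesics other than those on the inner AH never intersect the inner AH; and radially outgoing null geodesics inside the inner AH ($x<0$) satisfy $x(v)\to0$ as $v\to\infty$. Consequently, an event horizon exists.
   Context: Spherically symmetric spacetime $ds^2=-f(v,r)A(v,r)^2dv^2+2A(v,r)\,dr\,dv+r^2d\Omega^2$ with $A>0$, $f,A\to1$ as $r\to\infty$, $f(v,0)=1$, $\partial_rf(v,0)=\partial_rA(v,0)=0$; $f(v,\cdot)$ has exactly two zeros $r_+(v)>r_-(v)$ (outer/inner apparent horizons, AHs), $f=F(r-r_+)(r-r_-)$ with $F>0$, and $h=AF>0$. Assumptions: $\partial_v r_+<0$; $r_\pm(v)\to r_c$ as $v\to\infty$; the sign of $\partial_v r_-$ is constant; the $v\to\infty$ limits of $A,F,h$ behave as analytic functions of $r$, so all $\partial_r^n h$ converge as $v\to\infty$. With $x=r-r_c$, $x_\pm=r_\pm-r_c$ and $h$ regarded as a function of $(v,x)$, radially outgoing null geodesics solve $dx/dv=\tfrac12h(v,x)(x-x_+(v))(x-x_-(v))$. The event horizon is the boundary of the region from which outgoing null geodesics do not reach future null infinity ($x\to\infty$). *)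

(* Defs.v *)
From Stdlib Require Import Reals.
From Coquelicot Require Import Coquelicot.
Open Scope R_scope.

(* Right-hand side of the radial outgoing null geodesic equation in Case 1
   (x_-(v) = 0):  dx/dv = 1/2 h(v,x) (x - x_+(v)) (x - 0). *)
Definition geod_rhs (h : R -> R -> R) (xp : R -> R) (v x : R) : R :=
  1/2 * h v x * (x - xp v) * (x - 0).

(* x is a radially outgoing null geodesic on the set I of advanced times:
   it stays in the spacetime (r >= 0, i.e. x >= -rc) and solves the ODE. *)
Definition outgoing_geod (h : R -> R -> R) (xp : R -> R) (rc : R)
  (I : R -> Prop) (x : R -> R) : Prop :=
  forall v, I v -> -rc <= x v /\ is_derive x v (geod_rhs h xp v (x v)).

Definition reaches_infinity (h : R -> R -> R) (xp : R -> R) (rc : R)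
  (v0 x0 : R) : Prop :=
  exists (b : Rbar) (x : R -> R),
    Rbar_lt v0 b /\ x v0 = x0 /\
    filterlim x (at_right v0) (locally x0) /\
    outgoing_geod h xp rc (fun v => v0 < v /\ Rbar_lt v b) x /\
    filterlim x (within (fun v => Rbar_lt v b) (Rbar_locally' b))
                (Rbar_locally p_infty).

Definition trapped_region (h : R -> R -> R) (xp : R -> R) (rc : R)
  (v0 x0 : R) : Prop :=
  -rc <= x0 /\ ~ reaches_infinity h xp rc v0 x0.

Definition event_horizon (h : R -> R -> R) (xp : R -> R) (rc : R)
  (v0 x0 : R) : Prop :=
  -rc <= x0 /\
  forall eps : R, 0 < eps ->
    (exists v1 x1, Rabs (v1 - v0) < eps /\ Rabs (x1 - x0) < eps /\
        trapped_region h xp rc v1 x1) /\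
    (exists v2 x2, Rabs (v2 - v0) < eps /\ Rabs (x2 - x0) < eps /\
        -rc <= x2 /\ ~ trapped_region h xp rc v2 x2).

(* Main.v *)
Require Import Defs.
From Stdlib Require Import Reals Lra Psatz ClassicalEpsilon Classical.
From Coquelicot Require Import Coquelicot.
Open Scope R_scope.

Definition ct (f : R -> R) (x : R) : Prop :=
  forall e, 0 < e -> exists d, 0 < d /\ forall y, Rabs (y - x) < d -> Rabs (f y - f x) < e.

Definition ct2 (f : R -> R -> R) (a b : R) : Prop :=
  forall e, 0 < e -> exists d, 0 < d /\ forall u z, Rabs (u - a) < d -> Rabs (z - b) < d ->
     Rabs (f u z - f a b) < e.

Lemma ct_cpt f x : ct f x -> continuity_pt f x.
Proof.
  intros H e He. destruct (H e He) as [d [Hd Hf]]. exists d; split; [lra|].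
  intros y [_ Hy]. apply Hf. exact Hy.
Qed.

Lemma cpt_ct f x : continuity_pt f x -> ct f x.
Proof.
  intros H e He. destruct (H e He) as [d [Hd Hf]]. exists d; split; [lra|].
  intros y Hy. destruct (Req_dec y x) as [->|Hn].
  - rewrite Rminus_eq_0, Rabs_R0; exact He.
  - apply (Hf y). split; [split; [exact I| auto] | exact Hy].
Qed.

Lemma derive_ct f x l : is_derive f x l -> ct f x.
Proof.
  intros H. apply cpt_ct. apply continuity_pt_filterlim.
  apply (ex_derive_continuous f x). exists l; exact H.
Qed.

Lemma c2d_ct2 f a b : continuity_2d_pt f a b -> ct2 f a b.
Proof.
  intros H e He. destruct (H (mkposreal e He)) as [d Hd].
  exists d; split; [apply cond_pos|]. intros u z Hu Hz. apply (Hd u z Hu Hz).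
Qed.

Lemma ct2_comp (g : R -> R -> R) p q a b :
  ct2 g (p a b) (q a b) -> ct2 p a b -> ct2 q a b ->
  ct2 (fun u z => g (p u z) (q u z)) a b.
Proof.
  intros Hg Hp Hq e He. destruct (Hg e He) as [d [Hd Hg']].
  destruct (Hp d Hd) as [d1 [Hd1 Hp']]. destruct (Hq d Hd) as [d2 [Hd2 Hq']].
  exists (Rmin d1 d2); split; [apply Rmin_glb_lt; auto|].
  intros u z Hu Hz. apply Hg'.
  - apply Hp'; eapply Rlt_le_trans; eauto; [apply Rmin_l|apply Rmin_l].
  - apply Hq'; eapply Rlt_le_trans; eauto; [apply Rmin_r|apply Rmin_r].
Qed.

Lemma ct2_comp1 (g : R -> R) p a b :
  ct g (p a b) -> ct2 p a b -> ct2 (fun u z => g (p u z)) a b.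
Proof.
  intros Hg Hp e He. destruct (Hg e He) as [d [Hd Hg']].
  destruct (Hp d Hd) as [d1 [Hd1 Hp']]. exists d1; split; auto.
Qed.

Lemma ct2_fst a b : ct2 (fun u z => u) a b.
Proof. intros e He; exists e; split; auto. Qed.
Lemma ct2_snd a b : ct2 (fun u z => z) a b.
Proof. intros e He; exists e; split; auto. Qed.
Lemma ct2_const c a b : ct2 (fun u z => c) a b.
Proof. intros e He; exists 1; split; [lra|]. intros. rewrite Rminus_eq_0, Rabs_R0; auto. Qed.

Lemma ct2_fst1 f a b : ct f a -> ct2 (fun u z => f u) a b.
Proof. intros H. apply (ct2_comp1 f (fun u z => u)); [exact H|apply ct2_fst]. Qed.
Lemma ct2_snd1 f a b : ct f b -> ct2 (fun u z => f z) a b.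
Proof. intros H. apply (ct2_comp1 f (fun u z => z)); [exact H|apply ct2_snd]. Qed.

Lemma ct2_plus p q a b : ct2 p a b -> ct2 q a b -> ct2 (fun u z => p u z + q u z) a b.
Proof.
  intros Hp Hq e He. destruct (Hp (e/2)) as [d1 [Hd1 H1]]; [lra|].
  destruct (Hq (e/2)) as [d2 [Hd2 H2]]; [lra|].
  exists (Rmin d1 d2); split; [apply Rmin_glb_lt; auto|].
  intros u z Hu Hz.
  assert (A1 := H1 u z ltac:(eapply Rlt_le_trans; eauto; apply Rmin_l) ltac:(eapply Rlt_le_trans; eauto; apply Rmin_l)).
  assert (A2 := H2 u z ltac:(eapply Rlt_le_trans; eauto; apply Rmin_r) ltac:(eapply Rlt_le_trans; eauto; apply Rmin_r)).
  replace (p u z + q u z - (p a b + q a b)) with ((p u z - p a b) + (q u z - q a b)) by ring.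
  eapply Rle_lt_trans; [apply Rabs_triang|lra].
Qed.

Lemma ct2_mult p q a b : ct2 p a b -> ct2 q a b -> ct2 (fun u z => p u z * q u z) a b.
Proof.
  intros Hp Hq.
  apply (ct2_comp (fun s t => s * t) p q a b); auto.
  intros e He.
  set (A := p a b); set (B := q a b).
  set (d := Rmin 1 (e / (2 * (Rabs A + Rabs B + 1)))).
  assert (Hpos : 0 < Rabs A + Rabs B + 1) by (pose proof (Rabs_pos A); pose proof (Rabs_pos B); lra).
  assert (Hd : 0 < d). { apply Rmin_glb_lt; [lra|]. apply Rdiv_lt_0_compat; lra. }
  exists d; split; auto. intros u z Hu Hz.
  assert (d1 : d <= 1) by apply Rmin_l.
  assert (d2 : d <= e / (2 * (Rabs A + Rabs B + 1))) by apply Rmin_r.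
  replace (u * z - A * B) with ((u - A) * (z - B) + (u - A) * B + A * (z - B)) by ring.
  assert (Hab := Rabs_pos (u-A)). assert (Hzb := Rabs_pos (z-B)).
  eapply Rle_lt_trans. { eapply Rle_trans; [apply Rabs_triang|].
    apply Rplus_le_compat_r. apply Rabs_triang. }
  rewrite !Rabs_mult.
  assert (Rabs (u - A) * Rabs (z - B) <= d * d) by (apply Rmult_le_compat; lra).
  assert (Rabs (u - A) * Rabs B <= d * Rabs B) by (apply Rmult_le_compat_r; [apply Rabs_pos|lra]).
  assert (Rabs A * Rabs (z - B) <= Rabs A * d) by (apply Rmult_le_compat_l; [apply Rabs_pos|lra]).
  assert (d * d <= d * 1) by (apply Rmult_le_compat_l; lra).
  assert (d * (Rabs A + Rabs B + 1) <= e/2).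
  { eapply Rle_trans. apply Rmult_le_compat_r; [lra|exact d2].
    right. field. lra. }
  nra.
Qed.

Lemma mvt_lb f df p q c : p <= q -> (forall u, p < u < q -> is_derive f u (df u)) ->
  (forall u, p <= u <= q -> ct f u) -> (forall u, p <= u <= q -> c <= df u) ->
  c * (q - p) <= f q - f p.
Proof.
  intros Hpq Hd Hc Hb.
  destruct (MVT_gen f p q df) as [x [Hx E]].
  - intros u Hu. rewrite Rmin_left, Rmax_right in Hu by lra. apply Hd; lra.
  - intros u Hu. rewrite Rmin_left, Rmax_right in Hu by lra. apply ct_cpt, Hc; lra.
  - rewrite Rmin_left, Rmax_right in Hx by lra. rewrite E.
    apply Rmult_le_compat_r; [lra|]. apply Hb; lra.
Qed.

Lemma mvt_ub f df p q c : p <= q -> (forall u, p < u < q -> is_derive f u (df u)) ->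
  (forall u, p <= u <= q -> ct f u) -> (forall u, p <= u <= q -> df u <= c) ->
  f q - f p <= c * (q - p).
Proof.
  intros Hpq Hd Hc Hb.
  destruct (MVT_gen f p q df) as [x [Hx E]].
  - intros u Hu. rewrite Rmin_left, Rmax_right in Hu by lra. apply Hd; lra.
  - intros u Hu. rewrite Rmin_left, Rmax_right in Hu by lra. apply ct_cpt, Hc; lra.
  - rewrite Rmin_left, Rmax_right in Hx by lra. rewrite E.
    apply Rmult_le_compat_r; [lra|]. apply Hb; lra.
Qed.

Lemma lip_ct f x L : 0 <= L -> (forall y, Rabs (f y - f x) <= L * Rabs (y - x)) -> ct f x.
Proof.
  intros HL H e He. exists (e / (L + 1)); split.
  - apply Rdiv_lt_0_compat; lra.
  - intros y Hy. eapply Rle_lt_trans; [apply H|].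
    assert (L * Rabs (y - x) <= L * (e / (L+1))) by (apply Rmult_le_compat_l; lra).
    assert (L * (e / (L + 1)) < e).
    { apply (Rmult_lt_reg_r (L+1)); [lra|]. field_simplify; [nra|lra]. }
    lra.
Qed.

Lemma ct_comp g f x : ct f x -> ct g (f x) -> ct (fun y => g (f y)) x.
Proof.
  intros Hf Hg e He. destruct (Hg e He) as [d [Hd H1]].
  destruct (Hf d Hd) as [d1 [Hd1 H2]]. exists d1; split; auto.
Qed.

Lemma ct_ct2_path h p q x : ct2 h (p x) (q x) -> ct p x -> ct q x -> ct (fun y => h (p y) (q y)) x.
Proof.
  intros H Hp Hq e He. destruct (H e He) as [d [Hd H1]].
  destruct (Hp d Hd) as [d1 [Hd1 H2]]. destruct (Hq d Hd) as [d2 [Hd2 H3]].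
  exists (Rmin d1 d2); split; [apply Rmin_glb_lt; auto|].
  intros y Hy. apply H1.
  - apply H2. eapply Rlt_le_trans; eauto; apply Rmin_l.
  - apply H3. eapply Rlt_le_trans; eauto; apply Rmin_r.
Qed.

Lemma ct_Rmax0 x : ct (fun y => Rmax 0 y) x.
Proof.
  apply (lip_ct _ _ 1); [lra|]. intros y. rewrite Rmult_1_l.
  unfold Rmax; destruct (Rle_dec 0 y), (Rle_dec 0 x);
  unfold Rabs; repeat destruct Rcase_abs; lra.
Qed.

Lemma ct_Rmaxc c x : ct (fun y => Rmax y c) x.
Proof.
  apply (lip_ct _ _ 1); [lra|]. intros y. rewrite Rmult_1_l.
  unfold Rmax; destruct (Rle_dec y c), (Rle_dec x c);
  unfold Rabs; repeat destruct Rcase_abs; lra.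
Qed.

Lemma ct_Rminc c x : ct (fun y => Rmin y c) x.
Proof.
  apply (lip_ct _ _ 1); [lra|]. intros y. rewrite Rmult_1_l.
  unfold Rmin; destruct (Rle_dec y c), (Rle_dec x c);
  unfold Rabs; repeat destruct Rcase_abs; lra.
Qed.

Lemma ct_inv1 x : ct (fun y => / (1 + Rmax 0 y)) x.
Proof.
  apply (lip_ct _ _ 1); [lra|]. intros y. rewrite Rmult_1_l.
  assert (A1 : 0 <= Rmax 0 y) by apply Rmax_l. assert (A2 : 0 <= Rmax 0 x) by apply Rmax_l.
  replace (/ (1 + Rmax 0 y) - / (1 + Rmax 0 x)) with ((Rmax 0 x - Rmax 0 y) / ((1 + Rmax 0 y) * (1 + Rmax 0 x))) by (field; lra).
  unfold Rdiv. rewrite Rabs_mult, Rabs_inv.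
  rewrite (Rabs_pos_eq ((1 + Rmax 0 y) * (1 + Rmax 0 x))) by nra.
  assert (Rabs (Rmax 0 x - Rmax 0 y) <= Rabs (y - x)).
  { unfold Rmax; destruct (Rle_dec 0 y), (Rle_dec 0 x);
    unfold Rabs; repeat destruct Rcase_abs; lra. }
  assert (/ ((1 + Rmax 0 y) * (1 + Rmax 0 x)) <= 1).
  { rewrite <- Rinv_1. apply Rinv_le_contravar; nra. }
  assert (0 <= / ((1 + Rmax 0 y) * (1 + Rmax 0 x))) by (apply Rlt_le, Rinv_0_lt_compat; nra).
  pose proof (Rabs_pos (Rmax 0 x - Rmax 0 y)). nra.
Qed.

Lemma gap_lt phi x A Bc : ct phi x -> phi x < A + Bc * x ->
  exists d, 0 < d /\ forall u, Rabs (u - x) < d -> phi u < A + Bc * u.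
Proof.
  intros Hct Hx. set (g := A + Bc * x - phi x).
  destruct (Hct (g/2)) as [d [Hd Hd']]; [unfold g; lra|].
  exists (Rmin d (g / (2 * (Rabs Bc + 1)))). split.
  { apply Rmin_glb_lt; auto. apply Rdiv_lt_0_compat; [unfold g; lra|]. pose proof (Rabs_pos Bc); lra. }
  intros u Hu. assert (H1 := Hd' u ltac:(eapply Rlt_le_trans; eauto; apply Rmin_l)).
  assert (H2 : Rabs (u - x) < g / (2 * (Rabs Bc + 1))) by (eapply Rlt_le_trans; eauto; apply Rmin_r).
  assert (H3 : Rabs (Bc * (u - x)) < g / 2).
  { rewrite Rabs_mult. pose proof (Rabs_pos Bc). pose proof (Rabs_pos (u-x)).
    assert (Rabs Bc * Rabs (u - x) <= Rabs Bc * (g / (2 * (Rabs Bc + 1)))) by (apply Rmult_le_compat_l; lra).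
    assert (Rabs Bc * (g / (2 * (Rabs Bc + 1))) < g/2).
    { apply (Rmult_lt_reg_r (2 * (Rabs Bc + 1))); [lra|]. field_simplify; [|lra].
      unfold g; nra. }
    lra. }
  apply Rabs_def2 in H1. apply Rabs_def2 in H3. unfold g in *. lra.
Qed.

Lemma ct_opp f x : ct f x -> ct (fun y => - f y) x.
Proof.
  intros H e He. destruct (H e He) as [d [Hd H']]. exists d; split; auto.
  intros y Hy. replace (- f y - - f x) with (- (f y - f x)) by ring. rewrite Rabs_Ropp. auto.
Qed.

Lemma gap_gt phi x A Bc : ct phi x -> A + Bc * x < phi x ->
  exists d, 0 < d /\ forall u, Rabs (u - x) < d -> A + Bc * u < phi u.
Proof.
  intros Hct Hx. destruct (gap_lt (fun y => - phi y) x (-A) (-Bc)) as [d [Hd H]].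
  - apply ct_opp; auto.
  - lra.
  - exists d; split; auto. intros u Hu. specialize (H u Hu). lra.
Qed.

Lemma cmp_eps phi a b A0 K ep : 0 < ep -> a <= b -> (forall w, ct phi w) -> phi a <= A0 ->
  (forall s, a <= s < b -> A0 + K * (s - a) <= phi s ->
     forall e, 0 < e -> exists d, 0 < d /\ forall k, 0 < k < d -> phi (s + k) - phi s <= (K + e) * k) ->
  phi b <= A0 + (K + ep) * (b - a) + ep.
Proof.
  intros Hep Hab Hct Ha Hdini.
  set (L := fun u => A0 + (K + ep) * (u - a) + ep).
  assert (HL : forall u, L u = (A0 - (K + ep) * a + ep) + (K + ep) * u) by (intros; unfold L; ring).
  set (E := fun s => a <= s <= b /\ forall u, a <= u <= s -> phi u <= L u).
  assert (Ea : E a).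
  { split; [lra|]. intros u Hu. replace u with a by lra. unfold L. lra. }
  assert (Eb : bound E). { exists b. intros s [Hs _]. lra. }
  destruct (completeness E Eb (ex_intro _ a Ea)) as [c [Hub Hlub]].
  assert (Hac : a <= c) by (apply Hub; exact Ea).
  assert (Hcb : c <= b) by (apply Hlub; intros s [Hs _]; lra).
  assert (Hbelow : forall u, a <= u < c -> phi u <= L u).
  { intros u Hu. destruct (classic (exists s, E s /\ u < s)) as [[s [[_ Hs] Hus]]|Hn].
    - apply Hs; lra.
    - exfalso. assert (c <= u); [|lra]. apply Hlub. intros s Es.
      destruct (Rle_dec s u); auto. exfalso. apply Hn. exists s; split; auto; lra. }
  assert (Hc : phi c <= L c).
  { destruct (Rle_lt_dec (phi c) (L c)) as [|Hlt]; auto. exfalso.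
    destruct (Req_dec c a) as [->|Hca].
    - unfold L in Hlt. lra.
    - rewrite HL in Hlt. destruct (gap_gt phi c _ _ (Hct c) Hlt) as [d [Hd H]].
      set (u := Rmax a (c - d/2)).
      assert (Hu1 : a <= u) by apply Rmax_l. assert (Hu2 : c - d/2 <= u) by apply Rmax_r.
      assert (Hu3 : u < c) by (unfold u; apply Rmax_lub_lt; lra).
      specialize (H u ltac:(rewrite Rabs_left by lra; lra)).
      specialize (Hbelow u ltac:(lra)). rewrite HL in Hbelow. lra. }
  assert (Hcb' : c = b).
  { destruct (Req_dec c b) as [|Hne]; auto. exfalso.
    assert (Hext : forall d, 0 < d -> (forall u, c < u < c + d -> phi u <= L u) -> False).
    { intros d Hd Hu. set (s := c + Rmin d (b - c) / 2).
      assert (Hm1 : 0 < Rmin d (b - c)) by (apply Rmin_glb_lt; lra).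
      assert (Rmin d (b - c) <= d) by apply Rmin_l. assert (Rmin d (b - c) <= b - c) by apply Rmin_r.
      assert (E s).
      { split; [unfold s; lra|]. intros u Hu'.
        destruct (Rlt_le_dec u c); [apply Hbelow; lra|].
        destruct (Req_dec u c) as [->|]; auto. apply Hu; unfold s in *; lra. }
      assert (s <= c) by (apply Hub; auto). unfold s in *; lra. }
    destruct (Rlt_le_dec (phi c) (L c)) as [Hlt|Hge].
    - rewrite HL in Hlt. destruct (gap_lt phi c _ _ (Hct c) Hlt) as [d [Hd H]].
      apply (Hext d Hd). intros u Hu. rewrite HL. left. apply H. rewrite Rabs_pos_eq; lra.
    - assert (Heq : phi c = L c) by lra.
      assert (Hcond : A0 + K * (c - a) <= phi c).
      { rewrite Heq. unfold L. nra. }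
      destruct (Hdini c ltac:(lra) Hcond ep Hep) as [d [Hd H]].
      apply (Hext d Hd). intros u Hu.
      specialize (H (u - c) ltac:(lra)). replace (c + (u - c)) with u in H by ring.
      rewrite Heq in H. unfold L in *. lra. }
  subst c. exact Hc.
Qed.

Lemma cmp phi a b A0 K : a <= b -> (forall w, ct phi w) -> phi a <= A0 ->
  (forall s, a <= s < b -> A0 + K * (s - a) <= phi s ->
     forall e, 0 < e -> exists d, 0 < d /\ forall k, 0 < k < d -> phi (s + k) - phi s <= (K + e) * k) ->
  phi b <= A0 + K * (b - a).
Proof.
  intros Hab Hct Ha Hd.
  destruct (Rle_lt_dec (phi b) (A0 + K * (b - a))) as [|Hlt]; auto. exfalso.
  set (g := phi b - (A0 + K * (b - a))).
  set (ep := g / (b - a + 2)).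
  assert (Hep : 0 < ep) by (apply Rdiv_lt_0_compat; unfold g; lra).
  assert (H := cmp_eps phi a b A0 K ep Hep Hab Hct Ha Hd).
  assert (ep * (b - a + 2) = g) by (unfold ep; field; lra).
  unfold g in *. nra.
Qed.

Lemma le_eta a b r : 0 < r -> (forall eta, 0 < eta < r -> b - eta < a) -> b <= a.
Proof.
  intros Hr H. destruct (Rle_lt_dec b a) as [|Hlt]; auto. exfalso.
  set (eta := Rmin (r/2) ((b - a)/2)).
  assert (0 < eta) by (apply Rmin_glb_lt; lra).
  assert (eta <= r/2) by apply Rmin_l. assert (eta <= (b-a)/2) by apply Rmin_r.
  specialize (H eta ltac:(lra)). lra.
Qed.

Lemma ct_piece f g t : (forall w, ct f w) -> (forall w, ct g w) -> f t = g t ->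
  forall w, ct (fun u => if Rle_dec u t then f u else g u) w.
Proof.
  intros Hf Hg Ht w e He.
  destruct (Hf w e He) as [d1 [Hd1 H1]]. destruct (Hg w e He) as [d2 [Hd2 H2]].
  destruct (Hf t e He) as [d3 [Hd3 H3]]. destruct (Hg t e He) as [d4 [Hd4 H4]].
  destruct (Rtotal_order w t) as [Hw|[Hw|Hw]].
  - exists (Rmin d1 (t - w)); split; [apply Rmin_glb_lt; lra|].
    intros y Hy. assert (Rmin d1 (t - w) <= d1) by apply Rmin_l. assert (Rmin d1 (t - w) <= t - w) by apply Rmin_r.
    apply Rabs_def2 in Hy as Hy'.
    destruct (Rle_dec y t); [|lra]. destruct (Rle_dec w t); [|lra]. apply H1. lra.
  - subst w. exists (Rmin d3 d4); split; [apply Rmin_glb_lt; lra|].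
    intros y Hy. assert (Rmin d3 d4 <= d3) by apply Rmin_l. assert (Rmin d3 d4 <= d4) by apply Rmin_r.
    destruct (Rle_dec t t); [|lra]. destruct (Rle_dec y t).
    + apply H3; lra.
    + rewrite Ht. apply H4; lra.
  - exists (Rmin d2 (w - t)); split; [apply Rmin_glb_lt; lra|].
    intros y Hy. assert (Rmin d2 (w - t) <= d2) by apply Rmin_l. assert (Rmin d2 (w - t) <= w - t) by apply Rmin_r.
    apply Rabs_def2 in Hy as Hy'.
    destruct (Rle_dec y t); [lra|]. destruct (Rle_dec w t); [lra|]. apply H2. lra.
Qed.

Lemma Rabs_def2b x a : Rabs x <= a -> - a <= x <= a.
Proof. unfold Rabs; destruct Rcase_abs; lra. Qed.

Section Perron.
Variable H : R -> R -> R.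
Hypothesis Hpos : forall u z, 0 < H u z.
Hypothesis Hle1 : forall u z, H u z <= 1.
Hypothesis Hct2 : forall u z, ct2 H u z.
Variables w0 y0 : R.

Definition dini (phi : R -> R) s := forall e, 0 < e -> exists d, 0 < d /\
  forall k, 0 < k < d -> phi (s + k) - phi s <= (H s (phi s) + e) * k.
Definition sub (phi : R -> R) := (forall w, ct phi w) /\ phi w0 <= y0 /\ forall s, w0 <= s -> dini phi s.

Lemma sub_lip phi a b : sub phi -> w0 <= a <= b -> phi b <= phi a + (b - a).
Proof.
  intros [Hc [_ Hd]] Hab. replace (phi a + (b - a)) with (phi a + 1 * (b - a)) by ring.
  apply cmp; [lra|auto|lra|]. intros s Hs _ e He.
  destruct (Hd s ltac:(lra) e He) as [d [Hdp Hk]]. exists d; split; auto.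
  intros k Hk'. specialize (Hk k Hk'). specialize (Hle1 s (phi s)). nra.
Qed.

Lemma sub_const : sub (fun _ => y0).
Proof.
  split; [|split].
  - intros w e He. exists 1; split; [lra|]. intros. rewrite Rminus_eq_0, Rabs_R0; auto.
  - lra.
  - intros s _ e He. exists 1; split; [lra|]. intros k Hk. specialize (Hpos s y0). nra.
Qed.

Definition glue (phi : R -> R) t sg dl := fun u =>
  if Rle_dec u t then phi u else phi t + sg * Rmin (u - t) dl.

Lemma glue_val phi t sg dl u : 0 < dl -> t <= u <= t + dl -> glue phi t sg dl u = phi t + sg * (u - t).
Proof.
  intros Hd Hu. unfold glue. destruct (Rle_dec u t).
  - replace u with t by lra. ring.
  - rewrite Rmin_left by lra. auto.
Qed.

Lemma glue_sub phi t sg dl : sub phi -> w0 <= t -> 0 < dl ->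
  (forall s, t <= s < t + dl -> sg < H s (phi t + sg * (s - t))) -> sub (glue phi t sg dl).
Proof.
  intros [Hc [H0 Hd]] Ht Hdl Hcond. split; [|split].
  - apply ct_piece; auto.
    + intros w. apply (lip_ct _ _ (Rabs sg)); [apply Rabs_pos|]. intros y.
      replace (phi t + sg * Rmin (y - t) dl - (phi t + sg * Rmin (w - t) dl)) with (sg * (Rmin (y - t) dl - Rmin (w - t) dl)) by ring.
      rewrite Rabs_mult. apply Rmult_le_compat_l; [apply Rabs_pos|].
      unfold Rmin; destruct (Rle_dec (y - t) dl), (Rle_dec (w - t) dl); unfold Rabs; repeat destruct Rcase_abs; lra.
    + rewrite Rminus_eq_0, Rmin_left by lra. ring.
  - unfold glue. destruct (Rle_dec w0 t); [auto|lra].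
  - intros s Hs e He. destruct (Rlt_le_dec s t) as [Hst|Hts].
    + destruct (Hd s Hs e He) as [d [Hdp Hk]]. exists (Rmin d (t - s)); split; [apply Rmin_glb_lt; lra|].
      intros k Hk'. assert (Rmin d (t - s) <= d) by apply Rmin_l. assert (Rmin d (t - s) <= t - s) by apply Rmin_r.
      unfold glue. destruct (Rle_dec (s + k) t); [|lra]. destruct (Rle_dec s t); [|lra]. apply Hk; lra.
    + destruct (Rlt_le_dec s (t + dl)) as [Hsd|Hsd].
      * exists (t + dl - s); split; [lra|]. intros k Hk.
        rewrite (glue_val phi t sg dl (s + k)) by lra. rewrite (glue_val phi t sg dl s) by lra.
        specialize (Hcond s ltac:(lra)). nra.
      * exists 1; split; [lra|]. intros k Hk. unfold glue.
        destruct (Rle_dec (s + k) t); [lra|]. destruct (Rle_dec s t) as [Hst|Hst].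
        { assert (dl <= 0) by lra. lra. }
        rewrite !Rmin_right by lra. specialize (Hpos s (phi t + sg * dl)). nra.
Qed.

Definition Eset w := fun z => exists phi, sub phi /\ z = phi (Rmax w w0).
Definition Y w := epsilon (inhabits 0) (fun m => is_lub (Eset w) m).

Lemma Y_lub w : is_lub (Eset w) (Y w).
Proof.
  unfold Y. apply epsilon_spec.
  assert (Hb : bound (Eset w)).
  { exists (y0 + (Rmax w w0 - w0)). intros z [phi [Hs ->]].
    assert (Hm : w0 <= Rmax w w0) by apply Rmax_r.
    pose proof (sub_lip phi w0 (Rmax w w0) Hs ltac:(lra)). destruct Hs as [_ [Hs _]]. lra. }
  destruct (completeness _ Hb (ex_intro _ y0 (ex_intro _ (fun _ => y0) (conj sub_const eq_refl)))) as [m Hm].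
  exists m; exact Hm.
Qed.

Lemma Y_ge phi w : sub phi -> w0 <= w -> phi w <= Y w.
Proof.
  intros Hs Hw. destruct (Y_lub w) as [Hub _]. apply Hub. exists phi; split; auto.
  rewrite Rmax_left by lra. auto.
Qed.

Lemma Y_approx w eta : w0 <= w -> 0 < eta -> exists phi, sub phi /\ Y w - eta < phi w.
Proof.
  intros Hw He. destruct (Y_lub w) as [Hub Hlub].
  destruct (classic (exists phi, sub phi /\ Y w - eta < phi w)) as [|Hn]; auto. exfalso.
  assert (Y w <= Y w - eta); [|lra]. apply Hlub. intros z [phi [Hs ->]].
  rewrite Rmax_left by lra. destruct (Rle_dec (phi w) (Y w - eta)); auto.
  exfalso. apply Hn. exists phi; split; auto; lra.
Qed.

Lemma Y_left w : w <= w0 -> Y w = Y w0.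
Proof.
  intros Hw. unfold Y. unfold Eset. rewrite Rmax_right by lra. rewrite Rmax_left by lra. reflexivity.
Qed.

Lemma Y_w0 : Y w0 = y0.
Proof.
  apply Rle_antisym.
  - destruct (Y_lub w0) as [_ Hlub]. apply Hlub. intros z [phi [[_ [Hs _]] ->]].
    rewrite Rmax_left by lra. auto.
  - apply (Y_ge (fun _ => y0)); [apply sub_const|lra].
Qed.

Lemma Y_mono0 a b : w0 <= a <= b -> Y a <= Y b.
Proof.
  intros Hab. apply (le_eta _ _ 1); [lra|]. intros eta He.
  destruct (Y_approx a eta ltac:(lra) ltac:(lra)) as [phi [Hs Hphi]].
  assert (Hg : sub (glue phi a 0 1)).
  { apply glue_sub; [exact Hs|lra|lra|]. intros s _. apply Hpos. }
  assert (Hv := Y_ge _ b Hg ltac:(lra)).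
  unfold glue in Hv. destruct (Rle_dec b a).
  - assert (b = a) by lra. subst b. lra.
  - lra.
Qed.

Lemma Y_lip0 a b : w0 <= a <= b -> Y b <= Y a + (b - a).
Proof.
  intros Hab. destruct (Y_lub b) as [_ Hlub]. apply Hlub. intros z [phi [Hs ->]].
  rewrite Rmax_left by lra. pose proof (sub_lip phi a b Hs Hab). pose proof (Y_ge phi a Hs ltac:(lra)). lra.
Qed.

Lemma Y_mono a b : a <= b -> Y a <= Y b.
Proof.
  intros Hab. destruct (Rle_dec a w0).
  - rewrite (Y_left a) by lra. destruct (Rle_dec b w0); [rewrite (Y_left b) by lra; lra|].
    apply Y_mono0; lra.
  - apply Y_mono0; lra.
Qed.

Lemma Y_lip a b : a <= b -> Y b <= Y a + (b - a).
Proof.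
  intros Hab. destruct (Rle_dec b w0).
  - rewrite (Y_left a), (Y_left b) by lra. lra.
  - destruct (Rle_dec a w0).
    + rewrite (Y_left a) by lra. pose proof (Y_lip0 w0 b ltac:(lra)). lra.
    + apply Y_lip0; lra.
Qed.

Lemma Y_ct w : ct Y w.
Proof.
  apply (lip_ct _ _ 1); [lra|]. intros y. rewrite Rmult_1_l.
  destruct (Rle_dec y w).
  - pose proof (Y_mono y w r). pose proof (Y_lip y w r).
    rewrite Rabs_left1 by lra. rewrite Rabs_left1 by lra. lra.
  - pose proof (Y_mono w y ltac:(lra)). pose proof (Y_lip w y ltac:(lra)).
    rewrite Rabs_pos_eq by lra. rewrite Rabs_pos_eq by lra. lra.
Qed.

Lemma Y_le_of w B : w0 <= w -> (forall phi, sub phi -> phi w <= B) -> Y w <= B.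
Proof.
  intros Hw Hb. destruct (Y_lub w) as [_ Hlub]. apply Hlub. intros z [phi [Hs ->]].
  rewrite Rmax_left by lra. auto.
Qed.

Lemma div_bound D h c e : h <> 0 -> Rabs (D - c * h) <= e * Rabs h -> Rabs (D / h - c) <= e.
Proof.
  intros Hh Hb. replace (D / h - c) with ((D - c * h) * / h) by (field; auto).
  rewrite Rabs_mult, Rabs_inv. assert (0 < Rabs h) by (apply Rabs_pos_lt; auto).
  apply (Rmult_le_reg_r (Rabs h)); auto. rewrite Rmult_assoc, Rinv_l by lra. lra.
Qed.

Lemma Y_deriv t : w0 < t -> is_derive Y t (H t (Y t)).
Proof.
  intros Ht. apply is_derive_Reals. intros eps Heps.
  set (c := H t (Y t)).
  assert (Hc0 : 0 < c) by apply Hpos. assert (Hc1 : c <= 1) by apply Hle1.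
  set (ep := Rmin (eps/2) 1).
  assert (Hep : 0 < ep) by (apply Rmin_glb_lt; lra).
  assert (Hep1 : ep <= 1) by apply Rmin_r. assert (Hep2 : ep <= eps/2) by apply Rmin_l.
  destruct (Hct2 t (Y t) ep Hep) as [rho [Hrho Hband]].
  assert (Hb : forall s z, Rabs (s - t) < rho -> Rabs (z - Y t) < rho -> c - ep < H s z < c + ep).
  { intros s z H1 H2. specialize (Hband s z H1 H2). apply Rabs_def2 in Hband. fold c in Hband. lra. }
  set (k0 := Rmin (rho/5) (t - w0)).
  assert (Hk0 : 0 < k0) by (apply Rmin_glb_lt; lra).
  assert (Hk1 : k0 <= rho/5) by apply Rmin_l. assert (Hk2 : k0 <= t - w0) by apply Rmin_r.
  assert (R1 : forall k, 0 < k < k0 -> Y (t + k) - Y t <= (c + ep) * k).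
  { intros k Hk. cut (Y (t + k) <= Y t + (c + ep) * k); [lra|].
    apply Y_le_of; [lra|]. intros phi Hs.
    replace k with (t + k - t) at 2 by ring.
    apply cmp; [lra|apply Hs|apply Y_ge; auto; lra|].
    intros s Hs1 Hs2 e He.
    destruct Hs as [Hc [H0 Hd]].
    destruct (Hd s ltac:(lra) e He) as [d [Hd0 Hd1]]. exists d; split; auto.
    intros j Hj. specialize (Hd1 j Hj).
    assert (Hl := sub_lip phi t s (conj Hc (conj H0 Hd)) ltac:(lra)).
    assert (Hy := Y_ge phi t (conj Hc (conj H0 Hd)) ltac:(lra)).
    assert (HH := Hb s (phi s) ltac:(apply Rabs_def1; lra) ltac:(apply Rabs_def1; nra)).
    nra. }
  assert (R2 : forall k, 0 < k < k0 -> (c - ep) * k <= Y (t + k) - Y t).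
  { intros k Hk. cut (Y t + (c - ep) * k <= Y (t + k)); [lra|].
    apply (le_eta _ _ (rho/5)); [lra|]. intros eta He.
    destruct (Y_approx t eta ltac:(lra) ltac:(lra)) as [phi [Hs Hphi]].
    assert (Hy := Y_ge phi t Hs ltac:(lra)).
    assert (Hg : sub (glue phi t (c - ep) k0)).
    { apply glue_sub; [exact Hs|lra|lra|]. intros s Hs'.
      assert (Rabs ((c - ep) * (s - t)) <= 2 * k0).
      { rewrite Rabs_mult. apply Rmult_le_compat; try apply Rabs_pos.
        - apply Rabs_le; lra.
        - rewrite Rabs_pos_eq; lra. }
      apply Rabs_def2b in H0.
      apply (Hb s _); apply Rabs_def1; lra. }
    assert (Hv := Y_ge _ (t + k) Hg ltac:(lra)).
    rewrite glue_val in Hv by lra. lra. }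
  assert (L1 : forall k, 0 < k < k0 -> Y t - Y (t - k) <= (c + ep) * k).
  { intros k Hk. cut (Y t <= Y (t - k) + (c + ep) * k); [lra|].
    apply (le_eta _ _ (rho/5)); [lra|]. intros eta He.
    destruct (Y_approx t eta ltac:(lra) ltac:(lra)) as [phi [Hs Hphi]].
    assert (Hm := Y_mono (t - k) t ltac:(lra)). assert (Hl := Y_lip (t - k) t ltac:(lra)).
    assert (phi t <= Y (t - k) + (c + ep) * (t - (t - k))); [|replace (t - (t - k)) with k in H0 by ring; lra].
    apply cmp; [lra|apply Hs|apply Y_ge; auto; lra|].
    intros s Hs1 Hs2 e He'.
    destruct Hs as [Hc [H0 Hd]].
    destruct (Hd s ltac:(lra) e He') as [d [Hd0 Hd1]]. exists d; split; auto.
    intros j Hj. specialize (Hd1 j Hj).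
    assert (Hy := Y_ge phi s (conj Hc (conj H0 Hd)) ltac:(lra)).
    assert (Hm2 := Y_mono s t ltac:(lra)).
    assert (HH := Hb s (phi s) ltac:(apply Rabs_def1; lra) ltac:(apply Rabs_def1; nra)).
    nra. }
  assert (L2 : forall k, 0 < k < k0 -> (c - ep) * k <= Y t - Y (t - k)).
  { intros k Hk. cut (Y (t - k) + (c - ep) * k <= Y t); [lra|].
    apply (le_eta _ _ (rho/5)); [lra|]. intros eta He.
    destruct (Y_approx (t - k) eta ltac:(lra) ltac:(lra)) as [phi [Hs Hphi]].
    assert (Hy := Y_ge phi (t - k) Hs ltac:(lra)).
    assert (Hm := Y_mono (t - k) t ltac:(lra)). assert (Hl := Y_lip (t - k) t ltac:(lra)).
    assert (Hg : sub (glue phi (t - k) (c - ep) k)).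
    { apply glue_sub; [exact Hs|lra|lra|]. intros s Hs'.
      assert (Rabs ((c - ep) * (s - (t - k))) <= 2 * k).
      { rewrite Rabs_mult. apply Rmult_le_compat; try apply Rabs_pos.
        - apply Rabs_le; lra.
        - rewrite Rabs_pos_eq; lra. }
      apply Rabs_def2b in H0.
      apply (Hb s _); apply Rabs_def1; lra. }
    assert (Hv := Y_ge _ t Hg ltac:(lra)).
    rewrite glue_val in Hv by lra. replace (t - (t - k)) with k in Hv by ring. lra. }
  exists (mkposreal k0 Hk0). intros h Hh Hhk. simpl in Hhk.
  apply Rle_lt_trans with ep; [|lra].
  apply div_bound; auto.
  destruct (Rlt_le_dec 0 h) as [Hp|Hn].
  - rewrite (Rabs_pos_eq h) by lra. rewrite Rabs_pos_eq in Hhk by lra.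
    specialize (R1 h (conj Hp Hhk)). specialize (R2 h (conj Hp Hhk)).
    apply Rabs_le. nra.
  - assert (h < 0) by (destruct Hn; auto; contradiction).
    rewrite (Rabs_left h) by lra. rewrite Rabs_left in Hhk by lra.
    specialize (L1 (-h) ltac:(lra)). specialize (L2 (-h) ltac:(lra)).
    replace (t - - h) with (t + h) in L1, L2 by ring.
    apply Rabs_le. nra.
Qed.

End Perron.

Lemma d_mult f g x df dg : is_derive f x df -> is_derive g x dg ->
  is_derive (fun t => f t * g t) x (df * g x + f x * dg).
Proof. intros H1 H2. exact (is_derive_mult f g x df dg H1 H2 Rmult_comm). Qed.

Lemma d_expK K x : is_derive (fun t => exp (K * t)) x (K * exp (K * x)).
Proof.
  assert (H := is_derive_comp exp (fun t => K * t) x (exp (K * x)) K (is_derive_exp (K * x))).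
  assert (H2 : is_derive (fun t => K * t) x K).
  { assert (H3 := is_derive_scal (fun t => t) x K 1 (is_derive_id x)). rewrite Rmult_1_r in H3. exact H3. }
  exact (H H2).
Qed.

Lemma ct_of_ct2 f a b : ct2 f a b -> ct (fun u => f u b) a.
Proof. intros H e He. destruct (H e He) as [d [Hd H']]. exists d; split; auto.
  intros y Hy. apply H'; auto. rewrite Rminus_eq_0, Rabs_R0; auto. Qed.

Lemma ct_mult p q x : ct p x -> ct q x -> ct (fun u => p u * q u) x.
Proof.
  intros Hp Hq. apply (ct_of_ct2 (fun u z => p u * q u) x 0).
  apply ct2_mult; apply ct2_fst1; auto.
Qed.

Lemma ct_plus p q x : ct p x -> ct q x -> ct (fun u => p u + q u) x.
Proof.
  intros Hp Hq. apply (ct_of_ct2 (fun u z => p u + q u) x 0).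
  apply ct2_plus; apply ct2_fst1; auto.
Qed.

Lemma ct_cst c x : ct (fun _ => c) x.
Proof. intros e He; exists 1; split; [lra|]. intros. rewrite Rminus_eq_0, Rabs_R0; auto. Qed.

Lemma ct_id x : ct (fun u => u) x.
Proof. intros e He; exists e; split; auto. Qed.

Lemma ct_abs f x : ct f x -> ct (fun u => Rabs (f u)) x.
Proof.
  intros H. apply (ct_comp Rabs f x H). apply (lip_ct _ _ 1); [lra|]. intros y.
  rewrite Rmult_1_l. apply Rabs_triang_inv2.
Qed.

Lemma bounded_on g p q : p <= q -> (forall u, p <= u <= q -> ct g u) ->
  exists M, 0 <= M /\ forall u, p <= u <= q -> Rabs (g u) <= M.
Proof.
  intros Hpq Hc. destruct (continuity_ab_maj (fun u => Rabs (g u)) p q Hpq) as [m [Hm _]].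
  - intros c Hc'. apply ct_cpt, ct_abs, Hc; auto.
  - exists (Rabs (g m)); split; [apply Rabs_pos|]. auto.
Qed.

Lemma in_dom (a : R) (b : Rbar) (p q u : R) : a < p -> Rbar_lt q b -> p <= u <= q -> a < u /\ Rbar_lt u b.
Proof. intros H1 H2 H3. split; [lra|]. destruct b as [bb| |]; simpl in *; [lra|exact I|contradiction]. Qed.


Lemma ivt_on x p q : p <= q -> (forall u, p <= u <= q -> ct x u) -> x p * x q <= 0 ->
  exists z, p <= z <= q /\ x z = 0.
Proof.
  intros Hpq Hc Hs.
  set (f := fun u => x (Rmin (Rmax u p) q)).
  assert (Hcl : forall u, p <= Rmin (Rmax u p) q <= q).
  { intros u. unfold Rmin, Rmax. repeat destruct Rle_dec; lra. }
  assert (Hfc : continuity f).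
  { intros u. apply ct_cpt. unfold f. apply (ct_comp x (fun u => Rmin (Rmax u p) q)).
    - apply (ct_comp (fun y => Rmin y q) (fun u => Rmax u p)); [apply ct_Rmaxc|apply ct_Rminc].
    - apply Hc, Hcl. }
  assert (Fp : f p = x p) by (unfold f; rewrite Rmax_left, Rmin_left by lra; auto).
  assert (Fq : f q = x q) by (unfold f; rewrite Rmax_left, Rmin_right by lra; auto).
  destruct (IVT_cor f p q Hfc Hpq ltac:(rewrite Fp, Fq; auto)) as [z [Hz Hfz]].
  exists z; split; auto. unfold f in Hfz. rewrite Rmax_left, Rmin_left in Hfz by lra. auto.
Qed.

Lemma posreal_half (e : posreal) : 0 < e / 2.
Proof. destruct e; simpl; lra. Qed.

Lemma right_pt (v1 : R) (b : Rbar) (eps : R) : Rbar_lt v1 b -> 0 < eps ->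
  exists u, v1 < u < v1 + eps /\ Rbar_lt u b.
Proof.
  intros Hb He. destruct b as [bb| |]; simpl in Hb.
  - exists (v1 + Rmin eps (bb - v1) / 2). assert (Rmin eps (bb - v1) <= eps) by apply Rmin_l.
    assert (Rmin eps (bb - v1) <= bb - v1) by apply Rmin_r. assert (0 < Rmin eps (bb - v1)) by (apply Rmin_glb_lt; lra).
    simpl. lra.
  - exists (v1 + eps / 2). simpl. split; [lra|exact I].
  - contradiction.
Qed.

Lemma open_dom (v : R) (b : Rbar) : Rbar_lt v b -> 0 < v ->
  exists r, 0 < r /\ forall u, Rabs (u - v) < r -> 0 < u /\ Rbar_lt u b.
Proof.
  intros Hb Hv. destruct b as [bb| |]; simpl in Hb.
  - exists (Rmin v (bb - v)). split; [apply Rmin_glb_lt; lra|]. intros u Hu.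
    assert (Rmin v (bb - v) <= v) by apply Rmin_l. assert (Rmin v (bb - v) <= bb - v) by apply Rmin_r.
    apply Rabs_def2 in Hu. simpl. lra.
  - exists v. split; auto. intros u Hu. apply Rabs_def2 in Hu. simpl. split; [lra|exact I].
  - contradiction.
Qed.

Lemma inv_ct (f g : R -> R) lo v r : (forall t, ct f t) ->
  (forall p q, lo <= p -> p < q -> f p < f q) -> 0 < r ->
  (forall u, Rabs (u - v) < r -> lo <= g u /\ f (g u) = u) -> lo < g v -> ct g v.
Proof.
  intros Hfc Hinc Hr Hg Hlo e He.
  assert (Hmono : forall p q, lo <= p -> p <= q -> f p <= f q).
  { intros p q Hp Hpq. destruct (Req_dec p q) as [->|]; [lra|]. left; apply Hinc; lra. }
  destruct (Hg v ltac:(rewrite Rminus_eq_0, Rabs_R0; lra)) as [_ Hv].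
  set (eta := Rmin e (g v - lo) / 2).
  assert (Heta : 0 < eta) by (unfold eta; assert (0 < Rmin e (g v - lo)) by (apply Rmin_glb_lt; lra); lra).
  assert (Heta1 : eta < e) by (unfold eta; assert (Rmin e (g v - lo) <= e) by apply Rmin_l; lra).
  assert (Heta2 : eta < g v - lo) by (unfold eta; assert (Rmin e (g v - lo) <= g v - lo) by apply Rmin_r; lra).
  set (lw := f (g v - eta)). set (hi := f (g v + eta)).
  assert (Hlw : lw < v) by (unfold lw; rewrite <- Hv at 2; apply Hinc; lra).
  assert (Hhi : v < hi) by (unfold hi; rewrite <- Hv at 1; apply Hinc; lra).
  set (d := Rmin r (Rmin (v - lw) (hi - v))).
  assert (Hd : 0 < d) by (unfold d; repeat apply Rmin_glb_lt; lra).
  assert (Hd1 : d <= r) by apply Rmin_l.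
  assert (Hd2 : d <= v - lw) by (unfold d; eapply Rle_trans; [apply Rmin_r|apply Rmin_l]).
  assert (Hd3 : d <= hi - v) by (unfold d; eapply Rle_trans; [apply Rmin_r|apply Rmin_r]).
  exists d; split; auto. intros u Hu.
  destruct (Hg u ltac:(lra)) as [Hgu Hfu]. apply Rabs_def2 in Hu.
  apply Rabs_def1.
  - destruct (Rlt_le_dec (g u) (g v + eta)); [lra|].
    assert (hi <= f (g u)) by (apply Hmono; lra). lra.
  - destruct (Rlt_le_dec (g v - eta) (g u)); [lra|].
    assert (f (g u) <= lw) by (apply Hmono; lra). lra.
Qed.

Lemma inv_deriv (f g : R -> R) lo v r d : (forall t, ct f t) ->
  (forall p q, lo <= p -> p < q -> f p < f q) -> 0 < r ->
  (forall u, Rabs (u - v) < r -> lo <= g u /\ f (g u) = u) -> lo < g v ->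
  is_derive f (g v) d -> 0 < d -> is_derive g v (/ d).
Proof.
  intros Hfc Hinc Hr Hg Hlo Hder Hd0.
  assert (Hgc := inv_ct f g lo v r Hfc Hinc Hr Hg Hlo).
  apply is_derive_Reals in Hder. apply is_derive_Reals. intros eps Heps.
  set (ep := Rmin (d/2) (eps * d * d / 2)).
  assert (Hep : 0 < ep) by (unfold ep; apply Rmin_glb_lt; [lra|]; apply Rmult_lt_0_compat; [|lra]; apply Rmult_lt_0_compat; nra).
  assert (Hep1 : ep <= d/2) by apply Rmin_l. assert (Hep2 : ep <= eps * d * d / 2) by apply Rmin_r.
  destruct (Hder ep Hep) as [d1 Hd1].
  destruct (Hgc d1 (cond_pos d1)) as [d2 [Hd2 Hgc']].
  assert (Hmin : 0 < Rmin d2 r) by (apply Rmin_glb_lt; auto).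
  exists (mkposreal _ Hmin). intros hh Hhh Hhr. simpl in Hhr.
  assert (Hh2 : Rabs hh < d2) by (eapply Rlt_le_trans; [exact Hhr|apply Rmin_l]).
  assert (Hh3 : Rabs hh < r) by (eapply Rlt_le_trans; [exact Hhr|apply Rmin_r]).
  destruct (Hg (v + hh) ltac:(replace (v + hh - v) with hh by ring; auto)) as [_ Hfu].
  destruct (Hg v ltac:(rewrite Rminus_eq_0, Rabs_R0; lra)) as [_ Hfv].
  set (k := g (v + hh) - g v).
  assert (Hk0 : k <> 0).
  { intros Hk. unfold k in Hk. assert (g (v + hh) = g v) by lra.
    assert (f (g (v + hh)) = f (g v)) by (rewrite H; auto). lra. }
  assert (Hk1 : Rabs k < d1) by (apply Hgc'; replace (v + hh - v) with hh by ring; auto).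
  specialize (Hd1 k Hk0 Hk1).
  replace (g v + k) with (g (v + hh)) in Hd1 by (unfold k; ring).
  rewrite Hfu, Hfv in Hd1. replace (v + hh - v) with hh in Hd1 by ring.
  set (q := hh / k) in Hd1.
  apply Rabs_def2 in Hd1 as Hq.
  assert (Hqpos : d / 2 < q) by lra.
  assert (Hqk : k / hh = / q) by (unfold q; field; auto).
  rewrite Hqk.
  replace (/ q - / d) with ((d - q) * / (q * d)) by (field; lra).
  rewrite Rabs_mult, Rabs_inv, (Rabs_pos_eq (q * d)) by nra.
  rewrite <- Rabs_Ropp, Ropp_minus_distr.
  assert (Hqd : d * d / 2 < q * d) by nra.
  apply (Rmult_lt_reg_r (q * d)); [nra|].
  rewrite Rmult_assoc, Rinv_l by nra. rewrite Rmult_1_r.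
  apply Rlt_le_trans with ep; auto.
  apply Rle_trans with (eps * d * d / 2); auto. nra.
Qed.

Lemma near_aux (y bb c : R) : Rabs (y - bb) < bb - c -> c < y.
Proof. intros H. apply Rabs_def2 in H. lra. Qed.

Lemma near_b (b : Rbar) (c : R) (P : R -> Prop) : Rbar_lt c b ->
  (forall v, c < v -> Rbar_lt v b -> P v) -> within (fun v => Rbar_lt v b) (Rbar_locally' b) P.
Proof.
  intros Hc HP. destruct b as [bb| |]; simpl in Hc.
  - exists (mkposreal (bb - c) ltac:(lra)). intros y Hy _ Hyb. change (Rabs (y - bb) < bb - c) in Hy.
    apply HP; [exact (near_aux y bb c Hy)|exact Hyb].
  - exists c. intros y Hy _. apply HP; auto.
  - contradiction.
Qed.

Section Main.
Variables (rc : R) (h : R -> R -> R) (hinf : R -> R) (xp : R -> R).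
Hypothesis Hrc : 0 < rc.
Hypothesis Hh : forall v x, -rc <= x -> 0 < h v x /\ continuity_2d_pt h v x.
Hypothesis Hxp : forall v, 0 < xp v.
Hypothesis Hxpd : forall v, exists d, is_derive xp v d /\ d < 0.
Hypothesis Hlim : is_lim xp p_infty 0.
Hypothesis Hhinf : forall x, -rc <= x -> 0 < hinf x /\ continuous hinf x.
Hypothesis Hunif : forall a b eps, 0 < eps -> exists V, forall v x,
      V < v -> a <= x <= b -> -rc <= x -> Rabs (h v x - hinf x) < eps.

Lemma xp_ct v : ct xp v.
Proof. destruct (Hxpd v) as [d [Hd _]]. exact (derive_ct _ _ _ Hd). Qed.

Lemma xp_decr p q : p <= q -> xp q <= xp p.
Proof.
  intros Hpq.
  assert (Hd : forall u, exists d, is_derive xp u d /\ d < 0) by exact Hxpd.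
  set (df := fun u => proj1_sig (constructive_indefinite_description _ (Hd u))).
  assert (Hdf : forall u, is_derive xp u (df u) /\ df u < 0).
  { intros u. unfold df. destruct (constructive_indefinite_description _ (Hd u)); simpl; auto. }
  assert (H := mvt_ub xp df p q 0 Hpq (fun u _ => proj1 (Hdf u)) (fun u _ => xp_ct u)
     (fun u _ => Rlt_le _ _ (proj2 (Hdf u)))). lra.
Qed.

Lemma h_path_ct (x : R -> R) u : ct x u -> -rc <= x u -> ct (fun t => h t (x t)) u.
Proof.
  intros Hx Hr. apply (ct_ct2_path h (fun t => t) x u).
  - apply c2d_ct2. apply Hh; auto.
  - apply ct_id.
  - auto.
Qed.

Lemma geod_0 : outgoing_geod h xp rc (fun _ => True) (fun _ => 0).
Proof.
  intros v _. split; [lra|].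
  unfold geod_rhs. replace (1 / 2 * h v 0 * (0 - xp v) * (0 - 0)) with 0 by ring.
  apply is_derive_Reals. apply derivable_pt_lim_const.
Qed.

Lemma uniq a (b : Rbar) x : outgoing_geod h xp rc (fun v => a < v /\ Rbar_lt v b) x ->
  forall v1, a < v1 -> Rbar_lt v1 b -> x v1 = 0 -> forall v, a < v -> Rbar_lt v b -> x v = 0.
Proof.
  intros Hg v1 Ha1 Hb1 H1 v Hav Hbv.
  set (g := fun u => 1/2 * h u (x u) * (x u - xp u)).
  assert (Hgeq : forall u, geod_rhs h xp u (x u) = g u * x u) by (intros; unfold geod_rhs, g; ring).
  assert (Hct : forall u, a < u -> Rbar_lt u b -> ct g u).
  { intros u H2 H3. destruct (Hg u (conj H2 H3)) as [Hr Hd].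
    assert (Hxc := derive_ct _ _ _ Hd). unfold g.
    apply ct_mult; [apply ct_mult; [apply ct_cst|apply h_path_ct; auto]|].
    apply ct_plus; auto. apply (ct_comp (fun y => - y)); [apply xp_ct|]. apply ct_opp, ct_id. }
  assert (Hxct : forall u, a < u -> Rbar_lt u b -> ct x u).
  { intros u H2 H3. destruct (Hg u (conj H2 H3)) as [_ Hd]. exact (derive_ct _ _ _ Hd). }
  destruct (Rle_dec v1 v) as [Hle|Hlt].
  - destruct (bounded_on g v1 v Hle (fun u Hu => let (A1, A2) := in_dom a b v1 v u Ha1 Hbv Hu in Hct u A1 A2)) as [M [HM HMb]].
    set (z := fun u => x u * x u * exp (- 2 * M * u)).
    assert (Hz : z v - z v1 <= 0 * (v - v1)).
    { apply (mvt_ub z (fun u => (geod_rhs h xp u (x u) * x u + x u * geod_rhs h xp u (x u)) * exp (-2 * M * u) + x u * x u * (-2 * M * exp (-2 * M * u)))); auto.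
      - intros u Hu. destruct (in_dom a b v1 v u Ha1 Hbv ltac:(lra)) as [A1 A2].
        destruct (Hg u (conj A1 A2)) as [_ Hd].
        unfold z. apply (d_mult (fun t => x t * x t) (fun t => exp (-2 * M * t))); [apply d_mult; auto|apply d_expK].
      - intros u Hu. destruct (in_dom a b v1 v u Ha1 Hbv Hu) as [A1 A2].
        unfold z. apply ct_mult; [apply ct_mult; apply Hxct; auto|].
        apply (ct_comp exp (fun t => -2 * M * t)).
        + apply ct_mult; [apply ct_cst|apply ct_id].
        + apply cpt_ct, derivable_continuous_pt, derivable_pt_exp.
      - intros u Hu. rewrite Hgeq. specialize (HMb u Hu). apply Rabs_def2b in HMb.
        assert (He := exp_pos (-2 * M * u)).
        assert (A : 0 <= x u * x u * exp (-2 * M * u)) by (apply Rmult_le_pos; [nra|lra]).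
        match goal with |- ?L <= _ => replace L with ((x u * x u * exp (-2 * M * u)) * (2 * (g u - M))) by ring end.
        nra. }
    unfold z in Hz. rewrite H1 in Hz. assert (He := exp_pos (-2 * M * v)).
    assert (Hq : x v * x v * exp (-2 * M * v) <= 0) by lra.
    assert (Hq2 : x v * x v <= 0) by (apply (Rmult_le_reg_r (exp (-2 * M * v))); [auto|lra]).
    nra.
  - destruct (bounded_on g v v1 ltac:(lra) (fun u Hu => let (A1, A2) := in_dom a b v v1 u Hav Hb1 Hu in Hct u A1 A2)) as [M [HM HMb]].
    set (z := fun u => x u * x u * exp (2 * M * u)).
    assert (Hz : 0 * (v1 - v) <= z v1 - z v).
    { apply (mvt_lb z (fun u => (geod_rhs h xp u (x u) * x u + x u * geod_rhs h xp u (x u)) * exp (2 * M * u) + x u * x u * (2 * M * exp (2 * M * u)))); [lra| | |].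
      - intros u Hu. destruct (in_dom a b v v1 u Hav Hb1 ltac:(lra)) as [A1 A2].
        destruct (Hg u (conj A1 A2)) as [_ Hd].
        unfold z. apply (d_mult (fun t => x t * x t) (fun t => exp (2 * M * t))); [apply d_mult; auto|apply d_expK].
      - intros u Hu. destruct (in_dom a b v v1 u Hav Hb1 Hu) as [A1 A2].
        unfold z. apply ct_mult; [apply ct_mult; apply Hxct; auto|].
        apply (ct_comp exp (fun t => 2 * M * t)).
        + apply ct_mult; [apply ct_cst|apply ct_id].
        + apply cpt_ct, derivable_continuous_pt, derivable_pt_exp.
      - intros u Hu. rewrite Hgeq. specialize (HMb u Hu). apply Rabs_def2b in HMb.
        assert (He := exp_pos (2 * M * u)).
        assert (A : 0 <= x u * x u * exp (2 * M * u)) by (apply Rmult_le_pos; [nra|lra]).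
        match goal with |- _ <= ?L => replace L with ((x u * x u * exp (2 * M * u)) * (2 * (g u + M))) by ring end.
        nra. }
    unfold z in Hz. rewrite H1 in Hz. assert (He := exp_pos (2 * M * v)).
    assert (Hq : x v * x v * exp (2 * M * v) <= 0) by lra.
    assert (Hq2 : x v * x v <= 0) by (apply (Rmult_le_reg_r (exp (2 * M * v))); [auto|lra]).
    nra.
Qed.

Lemma never_zero (a : R) (b : Rbar) x : outgoing_geod h xp rc (fun v => a < v /\ Rbar_lt v b) x ->
  forall v0, a < v0 -> Rbar_lt v0 b -> x v0 < 0 -> forall v, a < v -> Rbar_lt v b -> x v < 0.
Proof.
  intros Hg v0 H1 H2 H3 v H4 H5.
  destruct (Rlt_le_dec (x v) 0) as [|Hge]; auto. exfalso.
  assert (Hct : forall u, a < u -> Rbar_lt u b -> ct x u).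
  { intros u A1 A2. destruct (Hg u (conj A1 A2)) as [_ Hd]. exact (derive_ct _ _ _ Hd). }
  destruct (Rle_dec v0 v) as [Hle|Hlt].
  - destruct (ivt_on x v0 v Hle (fun u Hu => let (A1, A2) := in_dom a b v0 v u H1 H5 Hu in Hct u A1 A2) ltac:(nra)) as [z [Hz Hxz]].
    destruct (in_dom a b v0 v z H1 H5 Hz) as [A1 A2].
    pose proof (uniq a b x Hg z A1 A2 Hxz v0 H1 H2). lra.
  - destruct (ivt_on x v v0 ltac:(lra) (fun u Hu => let (A1, A2) := in_dom a b v v0 u H4 H2 Hu in Hct u A1 A2) ltac:(nra)) as [z [Hz Hxz]].
    destruct (in_dom a b v v0 z H4 H2 Hz) as [A1 A2].
    pose proof (uniq a b x Hg z A1 A2 Hxz v0 H1 H2). lra.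
Qed.

Lemma hinf_min lo hi : -rc <= lo -> lo <= hi -> exists m, 0 < m /\ forall y, lo <= y <= hi -> m <= hinf y.
Proof.
  intros Hlo Hlh. destruct (continuity_ab_min hinf lo hi Hlh) as [mx [Hm Hmx]].
  - intros c Hc. apply continuity_pt_filterlim. apply Hhinf. lra.
  - exists (hinf mx). split; [apply Hhinf; lra|]. auto.
Qed.

Lemma part3 (a : R) (x : R -> R) : outgoing_geod h xp rc (fun v => a < v) x ->
  (exists v0, a < v0 /\ x v0 < 0) -> is_lim x p_infty 0.
Proof.
  intros Hg [v0 [Hav0 Hx0]].
  assert (Hg' : outgoing_geod h xp rc (fun v => a < v /\ Rbar_lt v p_infty) x).
  { intros v [Hv _]. apply Hg; auto. }
  assert (Hneg : forall v, a < v -> x v < 0).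
  { intros v Hv. apply (never_zero a p_infty x Hg' v0 Hav0 I Hx0 v Hv I). }
  assert (Hrhs : forall v, a < v -> 0 < geod_rhs h xp v (x v)).
  { intros v Hv. unfold geod_rhs. destruct (Hg v Hv) as [Hr _].
    destruct (Hh v (x v) Hr) as [Hp _]. specialize (Hneg v Hv). specialize (Hxp v).
    assert (0 < (x v - xp v) * (x v - 0)) by nra. nra. }
  assert (Hinc : forall p q, a < p -> p <= q -> x p <= x q).
  { intros p q Hp Hpq.
    assert (H := mvt_lb x (fun v => geod_rhs h xp v (x v)) p q 0 Hpq
      (fun u Hu => proj2 (Hg u ltac:(lra)))
      (fun u Hu => derive_ct _ _ _ (proj2 (Hg u ltac:(lra))))
      (fun u Hu => Rlt_le _ _ (Hrhs u ltac:(lra)))). lra. }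
  assert (Hclaim : forall ep, 0 < ep -> exists v, v0 <= v /\ - ep < x v).
  { intros ep Hep. apply NNPP. intros Hn.
    assert (Hall : forall v, v0 <= v -> x v <= - ep).
    { intros v Hv. destruct (Rle_dec (x v) (-ep)); auto. exfalso. apply Hn. exists v; split; auto; lra. }
    set (lo := x v0).
    assert (Hlo : -rc <= lo) by (apply (proj1 (Hg v0 Hav0))).
    assert (Hle : lo <= - ep) by (apply Hall; lra).
    destruct (hinf_min lo (-ep) Hlo Hle) as [m [Hm Hmin]].
    destruct (Hunif lo (-ep) (m/2) ltac:(lra)) as [V HV].
    set (v1 := Rmax V v0 + 1).
    assert (Hv1 : V < v1 /\ v0 < v1) by (unfold v1; split; [pose proof (Rmax_l V v0)|pose proof (Rmax_r V v0)]; lra).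
    set (c := m / 2 * ep * ep / 2).
    assert (Hc : 0 < c) by (unfold c; apply Rmult_lt_0_compat; [|lra]; apply Rmult_lt_0_compat; nra).
    set (T := - lo / c + 1).
    assert (HT : 0 < T) by (unfold T; assert (0 <= - lo / c) by (apply Rmult_le_pos; [lra|left; apply Rinv_0_lt_compat; lra]); lra).
    assert (H := mvt_lb x (fun v => geod_rhs h xp v (x v)) v1 (v1 + T) c ltac:(lra)
      (fun u Hu => proj2 (Hg u ltac:(lra)))
      (fun u Hu => derive_ct _ _ _ (proj2 (Hg u ltac:(lra))))).
    assert (Hb : forall u, v1 <= u <= v1 + T -> c <= geod_rhs h xp u (x u)).
    { intros u Hu. assert (Hxu1 : x u <= - ep) by (apply Hall; lra).
      assert (Hxu2 : lo <= x u) by (apply Hinc; lra).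
      assert (Hr : -rc <= x u) by lra.
      specialize (HV u (x u) ltac:(lra) ltac:(lra) Hr). apply Rabs_def2 in HV.
      specialize (Hmin (x u) ltac:(lra)).
      assert (Hhu : m / 2 <= h u (x u)) by lra.
      specialize (Hxp u).
      assert (HP : ep * ep <= (x u - xp u) * (x u - 0)) by nra.
      unfold geod_rhs, c.
      assert (HQ : m / 2 * (ep * ep) <= h u (x u) * ((x u - xp u) * (x u - 0))) by (apply Rmult_le_compat; nra).
      lra. }
    specialize (H Hb).
    assert (Hx1 : lo <= x v1) by (apply Hinc; lra).
    assert (c * T = - lo + c) by (unfold T; field; lra).
    specialize (Hneg (v1 + T) ltac:(lra)). nra. }
  apply is_lim_spec. intros eps. simpl.
  destruct (Hclaim eps (cond_pos eps)) as [vs [Hvs Hxs]].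
  exists vs. intros y Hy. rewrite Rminus_0_r.
  assert (x vs <= x y) by (apply Hinc; lra). specialize (Hneg y ltac:(lra)).
  rewrite Rabs_left by lra. lra.
Qed.

Lemma trapped_neg v1 x1 : -rc <= x1 -> x1 < 0 -> trapped_region h xp rc v1 x1.
Proof.
  intros Hr Hx1. split; auto. intros [b [x [Hb [Hx0 [Hright [Hg Hinf]]]]]].
  assert (Hct : forall u, v1 < u -> Rbar_lt u b -> ct x u).
  { intros u A1 A2. destruct (Hg u (conj A1 A2)) as [_ Hd]. exact (derive_ct _ _ _ Hd). }
  assert (Hloc : locally x1 (fun y => y < 0)).
  { exists (mkposreal (- x1) ltac:(lra)). intros y Hy. change (Rabs (y - x1) < - x1) in Hy. apply Rabs_def2 in Hy. lra. }
  destruct (Hright _ Hloc) as [eps Heps].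
  destruct (right_pt v1 b eps Hb (cond_pos eps)) as [u [Hu Hub]].
  assert (Hxu : x u < 0).
  { apply Heps; [|lra]. change (Rabs (u - v1) < eps). apply Rabs_def1; lra. }
  assert (Hloc2 : Rbar_locally p_infty (fun y => 0 < y)) by (exists 0; auto).
  assert (Hev := Hinf _ Hloc2).
  assert (Hup : exists u', u < u' /\ Rbar_lt u' b /\ 0 < x u').
  { destruct b as [bb| |]; simpl in Hev, Hub.
    - destruct Hev as [e He].
      set (u' := (Rmax u (bb - e/2) + bb) / 2).
      assert (Rmax u (bb - e/2) < bb) by (apply Rmax_lub_lt; [lra|destruct e; simpl; lra]).
      assert (u <= Rmax u (bb - e/2)) by apply Rmax_l. assert (bb - e/2 <= Rmax u (bb - e/2)) by apply Rmax_r.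
      exists u'. split; [unfold u'; lra|]. split; [simpl; unfold u'; lra|].
      apply He; [| unfold u'; lra | simpl; unfold u'; lra].
      change (Rabs (u' - bb) < e). pose proof (cond_pos e). apply Rabs_def1; unfold u'; lra.
    - destruct Hev as [M HM]. exists (Rmax M u + 1).
      assert (M <= Rmax M u) by apply Rmax_l. assert (u <= Rmax M u) by apply Rmax_r.
      split; [lra|]. split; [exact I|]. apply HM; [lra|exact I].
    - contradiction. }
  destruct Hup as [u' [Huu [Hub' Hxu']]].
  assert (Hg' := Hg).
  destruct (ivt_on x u u' ltac:(lra) (fun w Hw => let (A1, A2) := in_dom v1 b u u' w ltac:(lra) Hub' Hw in Hct w A1 A2) ltac:(nra)) as [z [Hz Hxz]].
  destruct (in_dom v1 b u u' z ltac:(lra) Hub' Hz) as [A1 A2].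
  pose proof (uniq v1 b x Hg z A1 A2 Hxz u ltac:(lra) Hub). lra.
Qed.

Definition x2 := xp 0 + 1.
Definition Hf (w y : R) := / (1 + Rmax 0 (geod_rhs h xp y (Rmax (w - y) x2))).

Lemma x2_pos : 0 < x2.
Proof. unfold x2. specialize (Hxp 0). lra. Qed.

Lemma Hf_pos w y : 0 < Hf w y.
Proof. unfold Hf. apply Rinv_0_lt_compat. pose proof (Rmax_l 0 (geod_rhs h xp y (Rmax (w - y) x2))). lra. Qed.

Lemma Hf_le1 w y : Hf w y <= 1.
Proof. unfold Hf. pose proof (Rmax_l 0 (geod_rhs h xp y (Rmax (w - y) x2))).
  rewrite <- Rinv_1. apply Rinv_le_contravar; lra. Qed.

Lemma ct2_minus p q a b : ct2 p a b -> ct2 q a b -> ct2 (fun u z => p u z - q u z) a b.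
Proof.
  intros Hp Hq. apply (ct2_plus p (fun u z => - q u z)); auto.
  apply (ct2_comp1 (fun s => - s) q); auto. apply ct_opp, ct_id.
Qed.

Lemma Hf_ct2 w y : ct2 Hf w y.
Proof.
  unfold Hf. apply (ct2_comp1 (fun s => / (1 + Rmax 0 s)) (fun w y => geod_rhs h xp y (Rmax (w - y) x2))).
  { apply ct_inv1. }
  assert (HX : ct2 (fun w y => Rmax (w - y) x2) w y).
  { apply (ct2_comp1 (fun s => Rmax s x2) (fun w y => w - y)); [apply ct_Rmaxc|].
    apply ct2_minus; [apply ct2_fst|apply ct2_snd]. }
  assert (HXr : -rc <= Rmax (w - y) x2) by (pose proof (Rmax_r (w - y) x2); pose proof x2_pos; lra).
  unfold geod_rhs.
  apply ct2_mult; [apply ct2_mult; [apply ct2_mult|]|].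
  - apply ct2_const.
  - apply (ct2_comp h (fun w y => y) (fun w y => Rmax (w - y) x2)); [|apply ct2_snd|exact HX].
    apply c2d_ct2. apply Hh; auto.
  - apply ct2_minus; auto. apply ct2_snd1, xp_ct.
  - apply ct2_minus; auto. apply ct2_const.
Qed.

Definition Yf := Y Hf x2 0.
Definition xw w := w - Yf w.
Definition Fw w := geod_rhs h xp (Yf w) (xw w).

Lemma Yf_x2 : Yf x2 = 0.
Proof. apply (Y_w0 Hf Hf_pos Hf_le1). Qed.
Lemma Yf_mono a b : a <= b -> Yf a <= Yf b.
Proof. apply (Y_mono Hf Hf_pos Hf_le1). Qed.
Lemma Yf_lip a b : a <= b -> Yf b <= Yf a + (b - a).
Proof. apply (Y_lip Hf Hf_pos Hf_le1). Qed.
Lemma Yf_ct w : ct Yf w.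
Proof. apply (Y_ct Hf Hf_pos Hf_le1). Qed.

Lemma Yf_ge0 w : x2 <= w -> 0 <= Yf w.
Proof. intros H. rewrite <- Yf_x2. apply Yf_mono; auto. Qed.

Lemma xw_mono a b : a <= b -> xw a <= xw b.
Proof. intros H. unfold xw. pose proof (Yf_lip a b H). lra. Qed.

Lemma xw_ge w : x2 <= w -> x2 <= xw w.
Proof. intros H. assert (xw x2 = x2) by (unfold xw; rewrite Yf_x2; ring). rewrite <- H0 at 1. apply xw_mono; auto. Qed.

Lemma Fw_pos w : x2 <= w -> 0 < Fw w.
Proof.
  intros Hw. unfold Fw, geod_rhs.
  assert (H1 := xw_ge w Hw). assert (H2 := Yf_ge0 w Hw).
  assert (H3 := xp_decr 0 (Yf w) H2). pose proof x2_pos.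
  assert (H4 : 0 < h (Yf w) (xw w)) by (apply Hh; lra).
  unfold x2 in *. assert (0 < (xw w - xp (Yf w)) * (xw w - 0)) by (apply Rmult_lt_0_compat; lra). nra.
Qed.

Lemma Hf_eq w : x2 <= w -> Hf w (Yf w) = / (1 + Fw w).
Proof.
  intros Hw. unfold Hf, Fw. fold (xw w). rewrite (Rmax_left (xw w) x2) by (apply Rge_le, Rle_ge, xw_ge; auto).
  rewrite Rmax_right; [reflexivity|]. left. apply (Fw_pos w Hw).
Qed.

Lemma Yf_der w : x2 < w -> is_derive Yf w (/ (1 + Fw w)).
Proof.
  intros Hw. rewrite <- Hf_eq by lra. apply (Y_deriv Hf Hf_pos Hf_le1 Hf_ct2 x2 0 w Hw).
Qed.

Lemma Yf_strict p q : x2 <= p -> p < q -> Yf p < Yf q.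
Proof.
  intros Hp Hpq. destruct (MVT_gen Yf p q (fun u => Hf u (Yf u))) as [c [Hc E]].
  - intros u Hu. rewrite Rmin_left, Rmax_right in Hu by lra.
    apply (Y_deriv Hf Hf_pos Hf_le1 Hf_ct2 x2 0 u). lra.
  - intros u _. apply ct_cpt, Yf_ct.
  - assert (0 < Hf c (Yf c)) by apply Hf_pos. nra.
Qed.

Lemma d_minus_id f x df : is_derive f x df -> is_derive (fun t => t - f t) x (1 - df).
Proof.
  intros H. apply is_derive_Reals in H. apply is_derive_Reals.
  apply (derivable_pt_lim_minus id f x 1 df); auto. apply derivable_pt_lim_id.
Qed.

Lemma xw_der w : x2 < w -> is_derive xw w (1 - / (1 + Fw w)).
Proof. intros Hw. apply d_minus_id, Yf_der; auto. Qed.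

Lemma xw_ct w : ct xw w.
Proof. unfold xw. apply ct_plus; [apply ct_id|]. apply ct_opp, Yf_ct. Qed.

Lemma xw_unbounded B : exists w, x2 <= w /\ B < xw w.
Proof.
  apply NNPP. intros Hn.
  assert (Hall : forall w, x2 <= w -> xw w <= B).
  { intros w Hw. destruct (Rle_dec (xw w) B); auto. exfalso. apply Hn. exists w; split; auto; lra. }
  pose proof x2_pos as Hx2.
  assert (HB : x2 <= B) by (pose proof (xw_ge x2 (Rle_refl _)); pose proof (Hall x2 (Rle_refl _)); lra).
  destruct (hinf_min x2 B ltac:(lra) HB) as [m [Hm Hmin]].
  destruct (Hunif x2 B (m/2) ltac:(lra)) as [V HV].
  set (w1 := Rmax x2 (V + B) + 1).
  assert (Hw1 : x2 < w1 /\ V + B < w1) by (unfold w1; pose proof (Rmax_l x2 (V + B)); pose proof (Rmax_r x2 (V + B)); lra).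
  set (c := m / 2 * x2 / 2).
  assert (Hc : 0 < c) by (unfold c; nra).
  set (c' := c / (1 + c)).
  assert (Hc' : 0 < c') by (unfold c'; apply Rdiv_lt_0_compat; lra).
  set (T := B / c' + 1).
  assert (HT : 0 < T) by (unfold T; assert (0 <= B / c') by (apply Rmult_le_pos; [lra|left; apply Rinv_0_lt_compat; lra]); lra).
  assert (Hb : forall u, w1 <= u <= w1 + T -> c' <= 1 - / (1 + Fw u)).
  { intros u Hu.
    assert (Hxu : x2 <= xw u <= B) by (split; [apply xw_ge|apply Hall]; lra).
    assert (HY : V < Yf u) by (unfold xw in Hxu; lra).
    assert (HY0 := Yf_ge0 u ltac:(lra)).
    specialize (HV (Yf u) (xw u) HY Hxu ltac:(lra)). apply Rabs_def2 in HV.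
    specialize (Hmin (xw u) Hxu).
    assert (Hhu : m / 2 <= h (Yf u) (xw u)) by lra.
    assert (Hxp0 := xp_decr 0 (Yf u) HY0).
    assert (HP : x2 <= (xw u - xp (Yf u)) * (xw u - 0)).
    { unfold x2 in *. assert (1 <= xw u - xp (Yf u)) by lra. nra. }
    assert (HF : c <= Fw u).
    { unfold Fw, geod_rhs, c.
      assert (HQ : m / 2 * x2 <= h (Yf u) (xw u) * ((xw u - xp (Yf u)) * (xw u - 0))) by (apply Rmult_le_compat; lra).
      lra. }
    unfold c'. replace (1 - / (1 + Fw u)) with (Fw u / (1 + Fw u)) by (field; lra).
    apply (Rmult_le_reg_r ((1 + c) * (1 + Fw u))); [nra|].
    replace (c / (1 + c) * ((1 + c) * (1 + Fw u))) with (c * (1 + Fw u)) by (field; lra).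
    replace (Fw u / (1 + Fw u) * ((1 + c) * (1 + Fw u))) with (Fw u * (1 + c)) by (field; lra).
    nra. }
  assert (H := mvt_lb xw (fun u => 1 - / (1 + Fw u)) w1 (w1 + T) c' ltac:(lra)
     (fun u Hu => xw_der u ltac:(lra)) (fun u _ => xw_ct u) Hb).
  assert (Hx1 := xw_ge w1 ltac:(lra)).
  assert (Hend := Hall (w1 + T) ltac:(lra)).
  assert (c' * T = B + c') by (unfold T; field; lra).
  replace (w1 + T - w1) with T in H by ring. lra.
Qed.

Definition bY : Rbar := Lub_Rbar (fun z => exists w, x2 <= w /\ z = Yf w).

Lemma bY_gt w : x2 <= w -> Rbar_lt (Yf w) bY.
Proof.
  intros Hw. destruct (Lub_Rbar_correct (fun z => exists w, x2 <= w /\ z = Yf w)) as [Hub _].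
  assert (H1 : Rbar_le (Yf (w + 1)) bY) by (apply Hub; exists (w + 1); split; auto; lra).
  assert (H2 := Yf_strict w (w + 1) Hw ltac:(lra)).
  fold bY in H1. destruct bY as [bb| |]; simpl in *; auto; lra.
Qed.

Lemma bY_approx (v : R) : Rbar_lt v bY -> exists w, x2 <= w /\ v < Yf w.
Proof.
  intros Hv. apply NNPP. intros Hn.
  destruct (Lub_Rbar_correct (fun z => exists w, x2 <= w /\ z = Yf w)) as [_ Hlub].
  assert (Hle : Rbar_le bY v).
  { apply Hlub. intros z [w [Hw ->]]. simpl. destruct (Rle_dec (Yf w) v); auto.
    exfalso; apply Hn; exists w; split; auto; lra. }
  destruct bY as [bb| |]; simpl in *; lra || auto.
Qed.

Definition W (v : R) := epsilon (inhabits 0) (fun w => x2 <= w /\ Yf w = v).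

Lemma W_spec (v : R) : 0 <= v -> Rbar_lt v bY -> x2 <= W v /\ Yf (W v) = v.
Proof.
  intros H0 Hb. unfold W. apply epsilon_spec.
  destruct (bY_approx v Hb) as [w1 [Hw1 Hv1]].
  destruct (IVT_cor (fun w => Yf w - v) x2 w1) as [z [Hz Hfz]]; auto.
  - intros u. apply ct_cpt. apply ct_plus; [apply Yf_ct|apply ct_cst].
  - rewrite Yf_x2. nra.
  - exists z. split; [lra|]. lra.
Qed.

Lemma W_of w : x2 <= w -> W (Yf w) = w.
Proof.
  intros Hw. destruct (W_spec (Yf w) (Yf_ge0 w Hw) (bY_gt w Hw)) as [H1 H2].
  destruct (Rtotal_order (W (Yf w)) w) as [Hl|[He|Hg]]; auto.
  - pose proof (Yf_strict _ _ H1 Hl). lra.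
  - pose proof (Yf_strict _ _ Hw Hg). lra.
Qed.

Definition Xs (v : R) := W v - v.

Lemma Xs_eq (v : R) : 0 <= v -> Rbar_lt v bY -> Xs v = xw (W v).
Proof. intros H1 H2. unfold Xs, xw. destruct (W_spec v H1 H2) as [_ ->]. reflexivity. Qed.

Lemma reach : reaches_infinity h xp rc 0 x2.
Proof.
  pose proof x2_pos as Hx2.
  assert (Hb0 : Rbar_lt 0 bY) by (rewrite <- Yf_x2; apply bY_gt; lra).
  assert (HW0 : W 0 = x2) by (rewrite <- Yf_x2 at 1; apply W_of; lra).
  exists bY, Xs. split; [exact Hb0|]. split; [unfold Xs; rewrite HW0; ring|]. split; [|split].
  -
    apply filterlim_locally. intros eps.
    set (e := pos eps / 2).
    assert (He : 0 < e) by (unfold e; destruct eps; simpl; lra).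
    set (dl := Rmin (Yf (x2 + e)) e).
    assert (HY : 0 < Yf (x2 + e)) by (rewrite <- Yf_x2; apply Yf_strict; lra).
    assert (Hdl : 0 < dl) by (apply Rmin_glb_lt; lra).
    exists (mkposreal dl Hdl). intros u Hu Hu0. change (Rabs (u - 0) < dl) in Hu.
    rewrite Rminus_0_r, Rabs_pos_eq in Hu by lra.
    assert (Hdl1 : dl <= Yf (x2 + e)) by apply Rmin_l. assert (Hdl2 : dl <= e) by apply Rmin_r.
    assert (Hub : Rbar_lt u bY).
    { assert (H1 := bY_gt (x2 + e) ltac:(lra)). destruct bY as [bb| |]; simpl in *; auto; lra. }
    destruct (W_spec u ltac:(lra) Hub) as [HW1 HW2].
    assert (HW3 : W u < x2 + e).
    { destruct (Rlt_le_dec (W u) (x2 + e)) as [|Hge]; auto.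
      assert (Yf (x2 + e) <= Yf (W u)) by (apply Yf_mono; auto). lra. }
    change (Rabs (Xs u - x2) < eps). unfold Xs. apply Rabs_def1; unfold e in *; lra.
  - intros v [Hv Hvb]. destruct (W_spec v ltac:(lra) Hvb) as [HW1 HW2].
    assert (HWg : x2 < W v) by (destruct HW1 as [|He]; auto; rewrite <- He, Yf_x2 in HW2; lra).
    split.
    + rewrite Xs_eq by (auto; lra). pose proof (xw_ge (W v) HW1). lra.
    + destruct (open_dom v bY Hvb Hv) as [r [Hr Hrd]].
      assert (Hinv : is_derive W v (/ / (1 + Fw (W v)))).
      { apply (inv_deriv Yf W x2 v r); auto.
        - exact Yf_ct.
        - intros p q Hp Hpq. apply Yf_strict; auto.
        - intros u Hu. destruct (Hrd u Hu) as [A1 A2]. apply W_spec; auto; lra.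
        - apply Yf_der; auto.
        - apply Rinv_0_lt_compat. pose proof (Fw_pos (W v) HW1). lra. }
      assert (HF : Fw (W v) = geod_rhs h xp v (Xs v)).
      { unfold Fw. rewrite HW2. rewrite Xs_eq by (auto; lra). reflexivity. }
      rewrite <- HF.
      apply is_derive_Reals in Hinv. apply is_derive_Reals.
      replace (Fw (W v)) with (/ / (1 + Fw (W v)) - 1).
      * apply (derivable_pt_lim_minus W id v); auto. apply derivable_pt_lim_id.
      * rewrite Rinv_inv. ring.
  -
    intros P [M HM].
    destruct (xw_unbounded M) as [wM [HwM HxM]].
    apply (near_b bY (Yf wM)); [apply bY_gt; auto|].
    intros v Hv Hvb. apply HM.
    assert (H0 := Yf_ge0 wM HwM).
    destruct (W_spec v ltac:(lra) Hvb) as [HW1 HW2].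
    assert (HWg : wM <= W v).
    { destruct (Rle_lt_dec wM (W v)) as [|Hlt]; auto.
      assert (Yf (W v) <= Yf wM) by (apply Yf_mono; lra). lra. }
    rewrite Xs_eq by (auto; lra). pose proof (xw_mono wM (W v) HWg). lra.
Qed.

Lemma EH : exists v0 x0, event_horizon h xp rc v0 x0.
Proof.
  pose proof x2_pos as Hx2.
  set (T := fun x => -rc <= x <= x2 /\ trapped_region h xp rc 0 x).
  assert (HT1 : T (-rc)) by (split; [lra|apply trapped_neg; lra]).
  assert (HTb : bound T) by (exists x2; intros z [Hz _]; lra).
  destruct (completeness T HTb (ex_intro _ _ HT1)) as [s [Hub Hlub]].
  assert (Hs1 : -rc <= s) by (apply Hub; auto).
  assert (Hs2 : s <= x2) by (apply Hlub; intros z [Hz _]; lra).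
  exists 0, s. split; auto. intros eps Heps. split.
  - destruct (classic (exists x, T x /\ s - eps < x)) as [[x [Hx Hxs]]|Hn].
    + exists 0, x. rewrite Rminus_0_r, Rabs_R0. split; auto.
      assert (x <= s) by (apply Hub; auto).
      split; [apply Rabs_def1; lra|]. apply Hx.
    + exfalso. assert (s <= s - eps); [|lra]. apply Hlub. intros z Hz.
      destruct (Rle_dec z (s - eps)); auto. exfalso. apply Hn. exists z; split; auto; lra.
  - destruct (Req_dec s x2) as [->|Hne].
    + exists 0, x2. rewrite Rminus_0_r, Rabs_R0, Rminus_eq_0, Rabs_R0. split; auto. split; auto.
      split; [lra|]. intros [_ Hn]. apply Hn, reach.
    + set (x := Rmin (s + eps / 2) x2).
      assert (Hx1 : x <= s + eps/2) by apply Rmin_l. assert (Hx2' : x <= x2) by apply Rmin_r.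
      assert (Hx3 : s < x) by (apply Rmin_glb_lt; lra).
      exists 0, x. rewrite Rminus_0_r, Rabs_R0. split; auto. split; [apply Rabs_def1; lra|].
      split; [lra|]. intros Htr.
      assert (x <= s) by (apply Hub; split; [lra|auto]). lra.
Qed.

End Main.

Theorem lemma3
  (rc : R) (h : R -> R -> R) (hinf : R -> R) (xp : R -> R) :
  0 < rc ->
  (* h = A F > 0 and continuous on the spacetime region r >= 0 *)
  (forall v x, -rc <= x -> 0 < h v x /\ continuity_2d_pt h v x) ->
  (* outer AH: x_+ > x_- = 0, strictly decreasing, x_+ -> 0 *)
  (forall v, 0 < xp v) ->
  (forall v, exists d, is_derive xp v d /\ d < 0) ->
  is_lim xp p_infty 0 ->
  (* v -> oo limit of h: continuous positive, locally uniform convergence *)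
  (forall x, -rc <= x -> 0 < hinf x /\ continuous hinf x) ->
  (forall a b eps, 0 < eps -> exists V, forall v x,
      V < v -> a <= x <= b -> -rc <= x -> Rabs (h v x - hinf x) < eps) ->
  (* the inner AH x = 0 is an outgoing null geodesic *)
  outgoing_geod h xp rc (fun _ => True) (fun _ => 0) /\
  (* other outgoing null geodesics never meet the inner AH *)
  (forall (a : R) (b : Rbar) (x : R -> R),
      outgoing_geod h xp rc (fun v => a < v /\ Rbar_lt v b) x ->
      (exists v1, a < v1 /\ Rbar_lt v1 b /\ x v1 = 0) ->
      forall v, a < v -> Rbar_lt v b -> x v = 0) /\
  (* outgoing null geodesics inside the inner AH tend to it *)
  (forall (a : R) (x : R -> R),
      outgoing_geod h xp rc (fun v => a < v) x ->
      (exists v0, a < v0 /\ x v0 < 0) ->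
      is_lim x p_infty 0) /\
  (* an event horizon exists *)
  (exists v0 x0, event_horizon h xp rc v0 x0).
Proof.
  intros Hrc Hh Hxp Hxpd Hlim Hhinf Hunif.
  split; [|split; [|split]].
  - exact (geod_0 rc h xp Hrc).
  - intros a b x Hg [v1 [H1 [H2 H3]]] v Hv1 Hv2. exact (uniq rc h xp Hh Hxpd a b x Hg v1 H1 H2 H3 v Hv1 Hv2).
  - intros a0 x0 Hg Hex. eapply (part3 rc h hinf xp); eauto.
  - apply (EH rc h hinf xp); auto.
Qed.
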